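(* Let $q=2^h$ with $h\equiv 1\pmod 2$, and let $A_{1,3},A_{1,4},A_{2,3},A_{2,4},A_{3,4}\in\mathbb F_{q^4}$ with $(A_{1,3},A_{2,3},A_{3,4})\neq(0,0,0)$. Then the system $$\begin{cases} A_{2,3}u+A_{1,3}v=0\\ A_{2,4}u+A_{1,4}v=0\\ A_{3,4}v+A_{2,4}(u^q+v^{q^2})+A_{2,3}(u^{q^2}+v^{q^2}+v^q)=0\\ A_{3,4}u+A_{1,4}(u^q+v^{q^2})+A_{1,3}(u^{q^2}+v^{q^2}+v^q)=0 \end{cases}$$ has at most $q^2$ solutions $(u,v)\in\mathbb F_{q^4}^2$. *)

(* Defs.v *)
From mathcomp Require Import all_boot all_algebra.
Set Implicit Arguments. Unset Strict Implicit. Unset Printing Implicit Defensive.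
Import GRing.Theory.
Local Open Scope ring_scope.

Definition sol_set (F : finFieldType) (q : nat)
    (A13 A14 A23 A24 A34 : F) : {set F * F} :=
  [set p : F * F |
    let u := p.1 in let v := p.2 in
    [&& A23 * u + A13 * v == 0,
        A24 * u + A14 * v == 0,
        A34 * v + A24 * (u ^+ q + v ^+ (q ^ 2)%N)
          + A23 * (u ^+ (q ^ 2)%N + v ^+ (q ^ 2)%N + v ^+ q) == 0 &
        A34 * u + A14 * (u ^+ q + v ^+ (q ^ 2)%N)
          + A13 * (u ^+ (q ^ 2)%N + v ^+ (q ^ 2)%N + v ^+ q) == 0]].

(* Main.v *)
Require Import Defs.
From mathcomp Require Import all_boot all_algebra.
From mathcomp Require Import all_field ring zify.
Set Implicit Arguments. Unset Strict Implicit.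
Import GRing.Theory.
Local Open Scope ring_scope.
Lemma bound (F : finFieldType) (q : nat) (S : {set F * F}) (f : F * F -> F) (a b c : F) :
  (1 < q)%N -> ~~ [&& a == 0, b == 0 & c == 0] -> {in S &, injective f} ->
  (forall x, x \in S -> a * f x + b * f x ^+ q + c * f x ^+ (q ^ 2)%N = 0) ->
  (#|S| <= q ^ 2)%N.
Proof.
move=> q1 nz inj H.
pose p : {poly F} := a *: 'X + b *: 'X^q + c *: 'X^(q ^ 2)%N.
have qq : (q < q ^ 2)%N by rewrite -mulnn -{1}(mul1n q) ltn_mul2r q1 (ltnW q1).
have c1 : p`_1 = a.
  rewrite !coefD !coefZ coefX coefXn coefXn eqxx.
  by rewrite !(ltn_eqF q1) (ltn_eqF (ltn_trans q1 qq)) !mulr0 !addr0 mulr1.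
have c2 : p`_q = b.
  by rewrite !coefD !coefZ coefX !coefXn eqxx (ltn_eqF qq) (gtn_eqF q1) ?mulr0 mulr1 add0r addr0.
have c3 : p`_(q ^ 2)%N = c.
  by rewrite !coefD !coefZ coefX !coefXn eqxx (gtn_eqF qq) (gtn_eqF (ltn_trans q1 qq)) ?mulr0 ?mulr1 ?add0r.
have pnz : p != 0.
  apply/eqP => p0; move: nz; by rewrite -c1 -c2 -c3 p0 !coef0 eqxx.
have sz : (size p <= (q ^ 2).+1)%N.
  apply: leq_trans (size_polyD _ _) _; rewrite geq_max.
  rewrite (leq_trans (size_scale_leq _ _)) ?size_polyXn // andbT.
  apply: leq_trans (size_polyD _ _) _; rewrite geq_max.
  apply/andP; split.
    by rewrite (leq_trans (size_scale_leq _ _)) // size_polyX ltnS (ltnW (ltn_trans q1 qq)).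
  by rewrite (leq_trans (size_scale_leq _ _)) // size_polyXn ltnS ltnW.
apply: (@leq_trans #|f @: S|); first by rewrite (card_in_imset inj).
rewrite cardE.
have := max_poly_roots pnz _ (enum_uniq (mem (f @: S))).
move=> /(_ _) H1; rewrite -ltnS; apply: leq_trans (H1 _) sz.
apply/allP => x; rewrite mem_enum => /imsetP [y yS ->].
by rewrite /root /p !hornerE H.
Qed.

Lemma pow_mod3 m : (2 ^ (m.*2.+1) %% 3 = 2)%N.
Proof.
elim: m => [//|m IH].
have -> : (2 ^ (m.+1).*2.+1 = 4 * 2 ^ (m.*2.+1))%N by rewrite doubleS !expnS mulnA.
move: IH; set X := (2 ^ _)%N => IH. lia.
Qed.

Lemma frobD (F : fieldType) h (ch : (2 \in [pchar F])%N) (x y : F) :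
  (x + y) ^+ (2 ^ h) = x ^+ (2 ^ h) + y ^+ (2 ^ h).
Proof.
apply: exprDn_pchar. rewrite (eq_pnat _ (pcharf_eq ch)) pnatX pnat_id //.
Qed.

Lemma two0 (F : fieldType) (ch : (2 \in [pchar F])%N) : (1 + 1 : F) = 0.
Proof. by have := pcharf0 ch. Qed.

Lemma no_sol (F : finFieldType) h (hodd : odd h) (hF : #|F| = ((2 ^ h) ^ 4)%N)
  (ch : (2 \in [pchar F])%N) (d : F) : d ^+ (2 ^ h) * (d + 1) = 1 -> False.
Proof.
set q := (2 ^ h)%N => H1.
have t := two0 ch.
set y := d ^+ q.
set z := y ^+ q.
set w := z ^+ q.
have H2 : z * (y + 1) = 1.
  by have := congr1 (fun t => t ^+ q) H1; rewrite /= exprMn frobD // !expr1n.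
have H3 : w * (z + 1) = 1.
  by have := congr1 (fun t => t ^+ q) H2; rewrite /= exprMn frobD // !expr1n.
have E1 : z * d + d - 1 = 0.
  have -> : z * d + d - 1 = (d+1)*(z*(y+1)-1) - z*(y*(d+1)-1) + (d-z)*(1+1) by ring.
  by rewrite H1 H2 t !subrr !mulr0 subr0 addr0.
have E2 : w = d.
  apply/eqP; rewrite -subr_eq0; apply/eqP.
  have -> : w - d = -w*(z*d + d - 1) + d*(w*(z+1) - 1) by ring.
  by rewrite E1 H3 subrr !mulr0 addr0.
have E3 : y = d.
  have : d ^+ #|F| = d by apply: expf_card.
  rewrite hF -/q !expnS expn0 muln1 !exprM -/y -/z -/w E2. by [].
move: H1; rewrite -/y E3 => H1.
have E4 : d ^+ 3 = 1.
  apply/eqP; rewrite -subr_eq0; apply/eqP.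
  have -> : d ^+ 3 - 1 = (d+1)*(d*(d+1)-1) - d^+2*(1+1) by ring.
  by rewrite H1 t subrr !mulr0 subr0.
have E5 : y = d ^+ 2.
  rewrite /y {1}(divn_eq q 3) exprD (mulnC _ 3) exprM E4 expr1n mul1r.
  by rewrite /q -(odd_double_half h) hodd pow_mod3.
rewrite E3 in E5.
have : (1 : F) = 0.
  rewrite -H1 mulrDr mulr1 -expr2 -E5.
  have -> : d + d = d * (1 + 1) by ring.
  by rewrite t mulr0.
by move/eqP; rewrite oner_eq0.
Qed.

Theorem proposition4p4 (F : finFieldType) (h : nat) (hodd : odd h)
    (hF : #|F| = ((2 ^ h) ^ 4)%N)
    (A13 A14 A23 A24 A34 : F)
    (hA : (A13, A23, A34) != (0, 0, 0)) :
  (#|sol_set (2 ^ h) A13 A14 A23 A24 A34| <= (2 ^ h) ^ 2)%N.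
Proof.
have q1 : (1 < 2 ^ h)%N.
  case: h hodd {hF} => [//|h' _]; rewrite expnS; have := expn_gt0 2 h'; lia.
have ch : (2 \in [pchar F])%N.
  by apply: (@card_finPcharP _ 2 (h * 4)); rewrite // hF expnM.
have t := two0 ch.
have neg : forall x : F, - x = x.
  move=> x; apply/eqP; rewrite -subr_eq0.
  have -> : - x - x = - (x * (1 + 1)) by ring.
  by rewrite t mulr0 oppr0.
have q0 : (0 < 2 ^ h)%N by apply: ltnW.
have e0 : forall n, (0 < n)%N -> (0 : F) ^+ n = 0 by move=> n n0; rewrite expr0n; case: n n0.
have lin : forall a b x y : F, a != 0 -> b * x + a * y = 0 -> y = (b / a) * x.
  move=> a b x y anz /eqP; rewrite addr_eq0 neg => /eqP e.
  by rewrite mulrAC e mulrC mulKf.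
move: hA.
set q := (2 ^ h)%N => hA.
set S := sol_set q A13 A14 A23 A24 A34.
have sP : forall u v, (u, v) \in S ->
   [/\ A23 * u + A13 * v = 0, A24 * u + A14 * v = 0,
        A34 * v + A24 * (u ^+ q + v ^+ (q ^ 2)%N)
          + A23 * (u ^+ (q ^ 2)%N + v ^+ (q ^ 2)%N + v ^+ q) = 0 &
        A34 * u + A14 * (u ^+ q + v ^+ (q ^ 2)%N)
          + A13 * (u ^+ (q ^ 2)%N + v ^+ (q ^ 2)%N + v ^+ q) = 0].
  by move=> u v; rewrite /S /sol_set inE /= => /and4P [/eqP ? /eqP ? /eqP ? /eqP ?].
have q2 : (0 < q ^ 2)%N by rewrite expn_gt0 q0.
have [A13z|A13nz] := eqVneq A13 0.
  have [A23z|A23nz] := eqVneq A23 0.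
    have A34nz : A34 != 0.
      by apply: contraNneq hA => A34z; rewrite A13z A23z A34z.
    have [A14z|A14nz] := eqVneq A14 0.
      have u0 : forall x, x \in S -> x.1 = 0.
        move=> [u v] /sP [_ _ _]; rewrite A14z A13z !mul0r !addr0 => /eqP.
        by rewrite mulf_eq0 (negPf A34nz) => /eqP.
      apply: (@bound F q S snd A34 0 A24) => //.
      - by rewrite (negPf A34nz).
      - move=> [u v] [u' v'] hs hs' /= ev.
        by have := u0 _ hs; have := u0 _ hs'; rewrite /= ev => -> ->.
      - move=> [u v] hs; have /= u00 := u0 _ hs; move: hs; rewrite u00 => /sP [_ _ e3 _].
        move: e3; rewrite A23z !e0 // mul0r add0r addr0 /=.
        by rewrite mul0r addr0.
    set e := A24 / A14.
    have ve : forall x, x \in S -> x.2 = e * x.1.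
      by move=> [u v] /sP [_ e2 _ _]; apply: lin.
    apply: (@bound F q S fst A34 A14 (A14 * e ^+ (q ^ 2)%N)) => //.
    - by rewrite (negPf A34nz).
    - move=> [u v] [u' v'] hs hs' /= ev.
      by have := ve _ hs; have := ve _ hs'; rewrite /= ev => -> ->.
    - move=> [u v] hs; have /= vv := ve _ hs; move: hs; rewrite vv => /sP [_ _ _ e4].
      rewrite -e4 A13z !exprMn /=.
      set U := u ^+ q; set U2 := u ^+ (q ^ 2)%N; set E := e ^+ (q ^ 2)%N.
      ring.
  have u0 : forall x, x \in S -> x.1 = 0.
    move=> [u v] /sP [e1 _ _ _]; move: e1; rewrite A13z mul0r addr0 => /eqP.
    by rewrite mulf_eq0 (negPf A23nz) => /eqP.
  apply: (@bound F q S snd A34 A23 (A24 + A23)) => //.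
  - by rewrite (negPf A23nz) andbF.
  - move=> [u v] [u' v'] hs hs' /= ev.
    by have := u0 _ hs; have := u0 _ hs'; rewrite /= ev => -> ->.
  - move=> [u v] hs; have /= u00 := u0 _ hs; move: hs; rewrite u00 => /sP [_ _ e3 _].
    rewrite -e3 !e0 // /=. ring.
set c := A23 / A13.
have vc : forall x, x \in S -> x.2 = c * x.1.
  by move=> [u v] /sP [e1 _ _ _]; apply: lin.
apply: (@bound F q S fst A34 (A14 + A13 * c ^+ q)
          (A14 * c ^+ (q ^ 2)%N + A13 + A13 * c ^+ (q ^ 2)%N)) => //.
- apply/negP => /and3P [_ /eqP b0 /eqP ee0].
  set d := c ^+ q.
  have dq : c ^+ (q ^ 2)%N = d ^+ q by rewrite /d -exprM mulnn.
  rewrite dq in ee0.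
  apply: (no_sol hodd hF ch (d := d)).
  have : A13 * (d ^+ q * (d + 1) - 1) = 0.
    have -> : A13 * (d ^+ q * (d + 1) - 1) =
      (A14 + A13 * d) * d ^+ q - (A14 * d ^+ q + A13 + A13 * d ^+ q) + A13 * d ^+ q * (1 + 1) by ring.
    by rewrite b0 ee0 t !mulr0 mul0r subr0 addr0.
  by move/eqP; rewrite mulf_eq0 (negPf A13nz) subr_eq0 => /eqP.
- move=> [u v] [u' v'] hs hs' /= ev.
  by have := vc _ hs; have := vc _ hs'; rewrite /= ev => -> ->.
- move=> [u v] hs; have /= vv := vc _ hs; move: hs; rewrite vv => /sP [_ _ _ e4].
  rewrite -e4 !exprMn /=.
  set U := u ^+ q; set U2 := u ^+ (q ^ 2)%N; set C := c ^+ q; set C2 := c ^+ (q ^ 2)%N.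
  ring.
Qed.
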